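(* Let $E$ be a real Hilbert space with $\dim(E)\ge2$, $h\in E$ a unit vector, and $f:\mathbb{R}_{\ge0}\to\mathbb{R}_{\ge0}$ with $f(d)>0$ iff $d>0$. Let $x\preceq_f y\iff f(\|y_\perp-x_\perp\|)\le y_h-x_h$. Assume that $\preceq_f$ is topologically closed in $E\times E$, and that $f$ is square-superadditive, or merely superadditive in case $\dim(E)=2$. Then every pair of elements of $E$ has a join in $(E,\preceq_f)$.
   Context: For $x\in E$ write $x=x_h h+x_\perp$ with $x_h=(x,h)$ and $x_\perp$ orthogonal to $h$. The join of $P\subseteq E$ is an $x$ with $p\preceq_f x$ for all $p\in P$ and $x\preceq_f y$ for every $y$ with $p\preceq_f y$ for all $p\in P$. $f$ is superadditive if $f(x+y)\ge f(x)+f(y)$ for all $x,y\ge0$, and square-superadditive if $f(\sqrt{x^2+y^2})\ge f(x)+f(y)$ for all $x,y\ge0$. *)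

(* Defs.v *)
From HB Require Import structures.
From mathcomp Require Import all_boot all_order all_algebra.
From mathcomp Require Import all_classical all_reals all_analysis.
Set Implicit Arguments. Unset Strict Implicit. Unset Printing Implicit Defensive.
Import Order.TTheory GRing.Theory Num.Theory.
Import numFieldNormedType.Exports.
Local Open Scope classical_set_scope.
Local Open Scope ring_scope.

(* A real Hilbert space is modelled as a complete normed R-module E
   (R : realType) together with an inner product inducing its norm. *)
Definition is_inner_product (R : realType) (E : normedModType R)
  (ip : E -> E -> R) : Prop :=
  [/\ (forall x y, ip x y = ip y x),
      (forall (a : R) x y z, ip (a *: x + y) z = a * ip x z + ip y z) &
      (forall x, `|x| = Num.sqrt (ip x x))].

Definition lin_indep2 (R : realType) (E : normedModType R) (u v : E) : Prop :=
  forall a b : R, a *: u + b *: v = 0 -> a = 0 /\ b = 0.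

Definition dim_ge2 (R : realType) (E : normedModType R) : Prop :=
  exists u v : E, lin_indep2 u v.

Definition dim_eq2 (R : realType) (E : normedModType R) : Prop :=
  exists u v : E, lin_indep2 u v /\
    forall x : E, exists a b : R, x = a *: u + b *: v.

Definition comp_h (R : realType) (E : normedModType R) (ip : E -> E -> R)
  (h x : E) : R := ip x h.

Definition comp_perp (R : realType) (E : normedModType R) (ip : E -> E -> R)
  (h x : E) : E := x - comp_h ip h x *: h.

Definition f_le (R : realType) (E : normedModType R) (ip : E -> E -> R)
  (h : E) (f : R -> R) (x y : E) : Prop :=
  f `|comp_perp ip h y - comp_perp ip h x| <= comp_h ip h y - comp_h ip h x.

Definition is_join (T : Type) (le : T -> T -> Prop) (P : set T) (x : T) : Prop :=
  (forall p, P p -> le p x) /\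
  (forall y, (forall p, P p -> le p y) -> le x y).

(* f : R_{>=0} -> R_{>=0}; only values on [0, +oo) matter *)
Definition superadditive (R : realType) (f : R -> R) : Prop :=
  forall x y : R, 0 <= x -> 0 <= y -> f x + f y <= f (x + y).

Definition square_superadditive (R : realType) (f : R -> R) : Prop :=
  forall x y : R, 0 <= x -> 0 <= y ->
    f x + f y <= f (Num.sqrt (x ^+ 2 + y ^+ 2)).

(* Main.v *)
Require Import Defs.
From HB Require Import structures.
From mathcomp Require Import all_boot all_order all_algebra.
From mathcomp Require Import all_classical all_reals all_analysis.
From mathcomp Require Import ring lra.
Import Order.TTheory GRing.Theory Num.Theory.
Import numFieldNormedType.Exports.
Local Open Scope classical_set_scope.
Local Open Scope ring_scope.

Lemma ipDZ {R : realType} {E : normedModType R} {ip : E -> E -> R}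
  (Hip : is_inner_product ip) :
  [/\ (forall z, ip 0 z = 0), (forall x y z, ip (x + y) z = ip x z + ip y z),
      (forall a x z, ip (a *: x) z = a * ip x z) ,
      (forall x y z, ip (x - y) z = ip x z - ip y z) &
      (forall x y z, ip z (x + y) = ip z x + ip z y)].
Proof.
case: Hip => Hs Hl Hn.
have H0 : forall z, ip 0 z = 0.
  move=> z; have := Hl 1 0 0 z; rewrite scale1r addr0 mul1r => H.
  lra.
have HD : forall x y z, ip (x + y) z = ip x z + ip y z.
  by move=> x y z; have := Hl 1 x y z; rewrite scale1r mul1r.
have HZ : forall a x z, ip (a *: x) z = a * ip x z.
  by move=> a x z; rewrite -[a *: x]addr0 Hl H0 addr0.
split => //.
  by move=> x y z; rewrite HD -scaleN1r HZ mulN1r.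
by move=> x y z; rewrite Hs HD !(Hs _ z).
Qed.

Lemma ip_norm2 {R : realType} {E : normedModType R} {ip : E -> E -> R}
  (Hip : is_inner_product ip) x : `|x| ^+ 2 = ip x x.
Proof.
have [H0 _ _ _ _] := ipDZ Hip.
case: Hip => _ _ Hn.
have [lt0|ge0] := ltP (ip x x) 0.
  have : `|x| = 0 by rewrite Hn ltr0_sqrtr.
  by move/normr0_eq0 => x0; move: lt0; rewrite x0 H0 ltxx.
by rewrite Hn sqr_sqrtr.
Qed.
Lemma f_mono {R : realType} {E : normedModType R} (f : R -> R)
  (Hf_nonneg : forall d : R, 0 <= d -> 0 <= f d)
  (Hsup : square_superadditive f \/ (dim_eq2 E /\ superadditive f)) :
  forall a b : R, 0 <= a -> a <= b -> f a <= f b.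
Proof.
move=> a b a0 ab.
case: Hsup => [Hs|[_ Hs]].
  have c0 : 0 <= b ^+ 2 - a ^+ 2 by rewrite subr_ge0 lerXn2r // ?nnegrE //; lra.
  have := Hs a (Num.sqrt (b ^+ 2 - a ^+ 2)) a0 (sqrtr_ge0 _).
  rewrite sqr_sqrtr // [a ^+ 2 + _]addrC subrK sqrtr_sqr ger0_norm; last lra.
  have := Hf_nonneg _ (sqrtr_ge0 (b ^+ 2 - a ^+ 2)); lra.
have := Hs a (b - a) a0 ltac:(lra); rewrite [a + _]addrC subrK.
have := Hf_nonneg (b - a) ltac:(lra); lra.
Qed.

Lemma f0 {R : realType} (f : R -> R)
  (Hf_nonneg : forall d : R, 0 <= d -> 0 <= f d)
  (Hf_pos : forall d : R, 0 <= d -> (0 < f d <-> 0 < d)) : f 0 = 0.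
Proof.
have := Hf_nonneg 0 (lexx _); have [H _] := Hf_pos 0 (lexx _).
rewrite le_eqVlt => /orP [/eqP <- //|/H]; by rewrite ltxx.
Qed.
Lemma hh1 {R : realType} {E : normedModType R} {ip : E -> E -> R}
  (Hip : is_inner_product ip) {h : E} (Hh : `|h| = 1) : ip h h = 1.
Proof. by rewrite -(ip_norm2 Hip) Hh expr1n. Qed.

Lemma comp_calc {R : realType} {E : normedModType R} {ip : E -> E -> R}
  (Hip : is_inner_product ip) {h : E} (Hh : `|h| = 1) (c : R) (w : E) :
  ip w h = 0 -> comp_h ip h (c *: h + w) = c /\ comp_perp ip h (c *: h + w) = w.
Proof.
have [H0 HD HZ HB _] := ipDZ Hip => wh.
have ch : comp_h ip h (c *: h + w) = c by rewrite /comp_h HD HZ wh (hh1 Hip Hh) mulr1 addr0.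
split => //; by rewrite /comp_perp ch [c *: h + w]addrC addrK.
Qed.

Lemma perp_orth {R : realType} {E : normedModType R} {ip : E -> E -> R}
  (Hip : is_inner_product ip) {h : E} (Hh : `|h| = 1) (x : E) :
  ip (comp_perp ip h x) h = 0.
Proof.
have [H0 HD HZ HB _] := ipDZ Hip.
by rewrite /comp_perp HB HZ (hh1 Hip Hh) mulr1 /comp_h subrr.
Qed.

Lemma LC {R : realType} {E : normedModType R} {ip : E -> E -> R}
  (Hip : is_inner_product ip) {h : E} (Hh : `|h| = 1) (f : R -> R)
  (Hclosed : closed [set p : E * E | f_le ip h f p.1 p.2])
  (e : E) (He1 : `|e| = 1) (Heh : ip e h = 0) :
  forall d K, 0 < d -> (forall d', 0 <= d' -> d' < d -> f d' <= K) -> f d <= K.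
Proof.
have [H0 HD HZ HB _] := ipDZ Hip.
have key : forall K t, 0 <= t -> f_le ip h f 0 (K *: h + t *: e) <-> f t <= K.
  move=> K t t0.
  have [c1 c2] := comp_calc Hip Hh K (t *: e) ltac:(by rewrite HZ Heh mulr0).
  have p0 : comp_perp ip h 0 = 0 by rewrite /comp_perp /comp_h H0 scale0r subr0.
  rewrite /f_le c1 c2 p0 subr0 normrZ He1 mulr1 ger0_norm //.
  by rewrite /comp_h H0 subr0.
move=> d K d0 Hd.
apply/(key K d (ltW d0)).
have Hn : \forall t \near d^'-, [set p : E * E | f_le ip h f p.1 p.2]
    ((0 : E), K *: h + t *: e).
  near=> t; apply/(key K t).
    by near: t; apply: nbhs_left_ge.
  apply: Hd.
    by near: t; apply: nbhs_left_ge.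
  by near: t; apply: nbhs_left_lt.
have Hc : (fun t : R => ((0 : E), K *: h + t *: e)) @ d^'- --> ((0 : E), K *: h + d *: e).
  apply: cvg_at_left_filter.
  apply: cvg_pair; first exact: cvg_cst.
  apply: cvgD; first exact: cvg_cst.
  apply: cvgZr_tmp; exact: cvg_id.
exact: (closed_cvg _ Hclosed Hn _ Hc).
Unshelve. all: by end_near.
Qed.
Lemma addr6 {V : zmodType} (p1 q1 p2 q2 p3 q3 : V) :
  (p1 + q1) + (p2 + q2) + (p3 + q3) = p1 + p2 + p3 + (q1 + q2 + q3).
Proof. by rewrite [(p1 + q1) + _]addrACA; exact: addrACA. Qed.

Lemma dim2_par {R : realType} {E : normedModType R} {ip : E -> E -> R}
  (Hip : is_inner_product ip) {h : E} (Hh : `|h| = 1) (Hd : dim_eq2 E)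
  (e n : E) : e != 0 -> ip e h = 0 -> ip n h = 0 -> exists l : R, n = l *: e.
Proof.
have [H0 HD HZ HB _] := ipDZ Hip.
move=> e0 eh nh.
case: Hd => u [v [_ Hsp]].
case: (Hsp h) => a0 [b0 hE].
case: (Hsp e) => a1 [b1 eE].
case: (Hsp n) => a2 [b2 nE].
pose al := a1 * b2 - a2 * b1.
pose be := a2 * b0 - a0 * b2.
pose ga := a0 * b1 - a1 * b0.
have Z : al *: h + be *: e + ga *: n = 0.
  have -> : al *: h + be *: e + ga *: n =
    (al * a0 + be * a1 + ga * a2) *: u + (al * b0 + be * b1 + ga * b2) *: v.
    rewrite hE eE nE !scalerDr !scalerA !scalerDl.
    by rewrite addr6.
  have -> : al * a0 + be * a1 + ga * a2 = 0 by rewrite /al /be /ga; ring.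
  have -> : al * b0 + be * b1 + ga * b2 = 0 by rewrite /al /be /ga; ring.
  by rewrite !scale0r addr0.
have : ip (al *: h + be *: e + ga *: n) h = 0 by rewrite Z H0.
rewrite !HD !HZ eh nh (hh1 Hip Hh) !mulr0 !addr0 mulr1 => al0.
have [a10|a10] := eqVneq a1 0.
  have b10 : b1 != 0.
    apply/eqP => b10; move: e0; rewrite eE a10 b10 !scale0r addr0 eqxx //.
  exists (b2 / b1); rewrite nE eE a10 scale0r add0r scalerA divfK //.
  have -> : a2 = 0.
    move: al0; rewrite /al a10 mul0r sub0r => /eqP; rewrite oppr_eq0 mulf_eq0.
    by rewrite (negbTE b10) orbF => /eqP.
  by rewrite scale0r add0r.
exists (a2 / a1); rewrite nE eE scalerDr !scalerA divfK //.
congr (_ + _); congr (_ *: _).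
apply: (mulfI a10); rewrite mulrA mulrCA divff // mulr1.
move: al0; rewrite /al => /eqP; rewrite subr_eq0 => /eqP ->; ring.
Qed.
Lemma ip_sq {R : realType} {E : normedModType R} {ip : E -> E -> R}
  (Hip : is_inner_product ip) (x y : E) :
  `|x + y| ^+ 2 = `|x| ^+ 2 + 2 * ip x y + `|y| ^+ 2.
Proof.
have [H0 HD HZ HB HD2] := ipDZ Hip.
have Hs : forall a b, ip a b = ip b a by case: Hip.
rewrite !(ip_norm2 Hip) HD !HD2 (Hs y x); ring.
Qed.

Lemma geoG {R : realType} {E : normedModType R} {ip : E -> E -> R}
  (Hip : is_inner_product ip) {h : E} (Hh : `|h| = 1) (f : R -> R)
  (Hf_nonneg : forall d : R, 0 <= d -> 0 <= f d)
  (Hsup : square_superadditive f \/ (dim_eq2 E /\ superadditive f))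
  (u1 w v e : E) (s : R) :
  `|e| = 1 -> ip e h = 0 -> ip (v - w) h = 0 -> w = u1 + s *: e -> 0 <= s ->
  0 <= ip (v - w) e ->
  (f s + f `|v - w| <= f `|v - u1|) /\
  (forall r', 0 <= r' -> r' < `|v - w| -> exists2 dl, 0 < dl &
     forall s', s <= s' -> s' <= s + dl -> f s' + f r' <= f `|v - u1|).
Proof.
have [H0 HD HZ HB HD2] := ipDZ Hip.
move=> e1 eh vwh wE s0 sg.
have ee : ip e e = 1 by rewrite -(ip_norm2 Hip) e1 expr1n.
have vu : v - u1 = (v - w) + s *: e by rewrite wE opprD addrA subrK.
set r := `|v - w|; set rho := `|v - u1|.
have r0 : 0 <= r by apply: normr_ge0.
have rho0 : 0 <= rho by apply: normr_ge0.
have mono := f_mono f Hf_nonneg Hsup.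
case: Hsup => [Hs|[Hd2 Hs]].
  have Hsq : forall a b, 0 <= a -> 0 <= b -> a ^+ 2 + b ^+ 2 <= rho ^+ 2 ->
      f a + f b <= f rho.
    move=> a b a0 b0 ab; apply: (le_trans (Hs a b a0 b0)); apply: mono.
      exact: sqrtr_ge0.
    by rewrite -(ger0_norm rho0) -sqrtr_sqr ler_sqrt // exprn_ge0.
  have rho2 : s ^+ 2 + r ^+ 2 <= rho ^+ 2.
    rewrite /rho vu (ip_sq Hip) normrZ e1 mulr1 ger0_norm // -/r.
    rewrite [ip _ (s *: e)]/= .
    have -> : ip (v - w) (s *: e) = s * ip (v - w) e.
      have Hsy : forall a b, ip a b = ip b a by case: Hip.
      by rewrite Hsy HZ Hsy.
    have := mulr_ge0 s0 sg; nra.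
  split; first by apply: Hsq.
  move=> r' r'0 r'r.
  exists (Num.min 1 ((r ^+ 2 - r' ^+ 2) / (2 * s + 1))).
    rewrite lt_min ltr01 /= divr_gt0 //; nra.
  move=> s' ss' s'd; apply: Hsq => //; first lra.
  have : s' - s <= Num.min 1 ((r ^+ 2 - r' ^+ 2) / (2 * s + 1)) by lra.
  move=> {}s'd.
  apply: le_trans rho2.
  have dl1 : s' - s <= 1 by move: s'd; rewrite le_min => /andP [? _]; lra.
  have dl2 : (s' - s) * (2 * s + 1) <= r ^+ 2 - r' ^+ 2.
    move: s'd; rewrite le_min => /andP [_ H].
    rewrite -ler_pdivlMr; last lra.
    lra.
  nra.
have e0 : e != 0 by apply/eqP => e0; move: e1; rewrite e0 normr0; lra.
case: (dim2_par Hip Hh Hd2 _ _ e0 eh vwh) => l vwl.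
have l0 : 0 <= l by move: sg; rewrite vwl HZ ee mulr1.
have rl : r = l by rewrite /r vwl normrZ e1 mulr1 ger0_norm.
have rhol : rho = s + l by rewrite /rho vu vwl -scalerDl normrZ e1 mulr1 ger0_norm // addrC; lra.
have Hl : forall a b, 0 <= a -> 0 <= b -> a + b <= rho -> f a + f b <= f rho.
  move=> a b a0 b0 ab; apply: (le_trans (Hs a b a0 b0)); apply: mono => //; exact: addr_ge0.
split; first by apply: Hl => //; lra.
move=> r' r'0 r'r; exists (r - r'); first lra.
move=> s' ss' s'd; apply: Hl; lra.
Qed.
Lemma keyV {R : realType} {E : normedModType R} {ip : E -> E -> R}
  (Hip : is_inner_product ip) {h : E} (Hh : `|h| = 1) (f : R -> R)
  (Hf_nonneg : forall d : R, 0 <= d -> 0 <= f d)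
  (Hclosed : closed [set p : E * E | f_le ip h f p.1 p.2])
  (Hsup : square_superadditive f \/ (dim_eq2 E /\ superadditive f))
  (u1 w v e : E) (s D a1 b c : R) :
  `|e| = 1 -> ip e h = 0 -> ip (v - w) h = 0 -> w = u1 + s *: e -> 0 <= s ->
  0 <= ip (v - w) e -> v != w -> a1 + f `|v - u1| <= b ->
  (c <= a1 + f s \/ (s < D /\ forall s', s < s' -> s' <= D -> c <= a1 + f s')) ->
  c + f `|v - w| <= b.
Proof.
move=> e1 eh vwh wE s0 sg vw Hb Hc.
have [G1 G2] := geoG Hip Hh f Hf_nonneg Hsup _ _ _ _ _ e1 eh vwh wE s0 sg.
case: Hc => [Hc|[sD Hc]]; first lra.
have r0 : 0 < `|v - w| by rewrite normr_gt0 subr_eq0.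
suff : f `|v - w| <= b - c by lra.
apply: (LC Hip Hh f Hclosed e e1 eh _ _ r0) => r' r'0 r'r.
have [dl dl0 Hdl] := G2 r' r'0 r'r.
pose s' := Num.min (s + dl) D.
have ss' : s < s' by rewrite /s' lt_min; apply/andP; split => //; lra.
have s'D : s' <= D by rewrite /s' ge_min lexx orbT.
have s'dl : s' <= s + dl by rewrite /s' ge_min lexx.
have := Hc s' ss' s'D; have := Hdl s' (ltW ss') s'dl; lra.
Qed.
Theorem mainTheorem17 (R : realType) (E : completeNormedModType R)
  (ip : E -> E -> R) (Hip : is_inner_product ip)
  (Hdim : dim_ge2 E)
  (h : E) (Hh : `|h| = 1)
  (f : R -> R)
  (Hf_nonneg : forall d : R, 0 <= d -> 0 <= f d)
  (Hf_pos : forall d : R, 0 <= d -> (0 < f d <-> 0 < d))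
  (Hclosed : closed [set p : E * E | f_le ip h f p.1 p.2])
  (Hsup : square_superadditive f \/ (dim_eq2 E /\ superadditive f)) :
  forall x y : E, exists j : E, is_join (f_le ip h f) [set x; y] j.
Proof.
have [H0 HD HZ HB HD2] := ipDZ Hip.
have Hsy : forall a b, ip a b = ip b a by case: Hip.
have mono := f_mono f Hf_nonneg Hsup.
have F0 := f0 f Hf_nonneg Hf_pos.
have refl : forall p, f_le ip h f p p by move=> p; rewrite /f_le !subrr normr0 F0.
move=> x y.
set a1 := comp_h ip h x; set a2 := comp_h ip h y.
set u1 := comp_perp ip h x; set u2 := comp_perp ip h y.
set D := `|u2 - u1|.
have fxy : f_le ip h f x y <-> f D <= a2 - a1 by [].
have fyx : f_le ip h f y x <-> f D <= a1 - a2 by rewrite /f_le /D distrC.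
have [Hxy|Hxy] := leP (f D) (a2 - a1).
  exists y; split.
    by move=> p [->|->]; [apply/fxy|apply: refl].
  by move=> z Hz; apply: Hz; right.
have [Hyx|Hyx] := leP (f D) (a1 - a2).
  exists x; split.
    by move=> p [->|->]; [apply: refl|apply/fyx].
  by move=> z Hz; apply: Hz; left.
have D0 : 0 < D.
  rewrite lt_neqAle normr_ge0 andbT; apply/eqP => D0.
  move: Hxy Hyx; rewrite -D0 F0; lra.
have Hpe : forall p, ip (comp_perp ip h p) h = 0 := perp_orth Hip Hh.
pose e := D^-1 *: (u2 - u1).
have e1 : `|e| = 1 by rewrite /e normrZ ger0_norm ?invr_ge0 ?normr_ge0 // mulVf // gt_eqF.
have eh : ip e h = 0 by rewrite /e HZ HB !Hpe subrr mulr0.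
have u2E : u2 = u1 + D *: e.
  by rewrite /e scalerA mulfV ?gt_eqF // scale1r addrC subrK.
pose A := [set s : R | 0 <= s /\ s <= D /\ a1 + f s <= a2 + f (D - s)].
have A0 : A 0 by rewrite /A /= lexx (ltW D0) F0 subr0 addr0; split => //; split => //; lra.
have Aub : ubound A D by move=> s [_ []].
have hsA : has_sup A by split; [exists 0|exists D].
pose ss := sup A.
have ss0 : 0 <= ss by apply: sup_upper_bound.
have ssD : ss <= D by apply: ge_sup => //; exists 0.
have notA : forall s', ss < s' -> s' <= D -> a2 + f (D - s') < a1 + f s'.
  move=> s' ss' s'D; rewrite ltNge; apply/negP => H.
  have : A s' by split; [lra|split].
  by move/(sup_upper_bound hsA); rewrite -/ss; lra.
have supA : forall t, t < ss -> exists2 s'', A s'' & t < s''.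
  move=> t ts; have [s'' As'' Hs''] := sup_adherent (ltac:(lra) : 0 < ss - t) hsA.
  by exists s'' => //; rewrite -/ss in Hs''; lra.
pose w := u1 + ss *: e.
pose c := Num.max (a1 + f ss) (a2 + f (D - ss)).
have wh : ip w h = 0 by rewrite /w HD HZ Hpe eh mulr0 addr0.
have [cj pj] := comp_calc Hip Hh c w wh.
have wu1 : `|w - u1| = ss by rewrite /w addrC addKr normrZ e1 mulr1 ger0_norm.
have wE2 : w = u2 + (D - ss) *: (- e).
  have -> : (D - ss) *: - e = (ss - D) *: e by rewrite scalerN -scaleNr opprB.
  rewrite /w u2E -[RHS]addrA -scalerDl; congr (_ + _ *: _); lra.
have wu2 : `|w - u2| = D - ss.
  by rewrite wE2 addrC addKr normrZ normrN e1 mulr1 ger0_norm //; lra.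
have c1 : a1 + f ss <= c by rewrite /c le_max lexx.
have c2 : a2 + f (D - ss) <= c by rewrite /c le_max lexx orbT.
exists (c *: h + w); split.
  move=> p [->|->]; rewrite /f_le cj pj -/a1 -/a2 -/u1 -/u2.
    by rewrite wu1; lra.
  by rewrite wu2; lra.
move=> z Hz.
have hx := Hz x (or_introl erefl); have hy := Hz y (or_intror erefl).
rewrite /f_le -/a1 -/a2 -/u1 -/u2 in hx hy.
rewrite /f_le cj pj.
set v := comp_perp ip h z in hx hy *; set b := comp_h ip h z in hx hy *.
have [vw|vw] := eqVneq v w.
  rewrite vw subrr normr0 F0 subr_ge0 /c ge_max.
  move: hx hy; rewrite vw wu1 wu2 => hx hy; apply/andP; split; lra.
have vwh : ip (v - w) h = 0 by rewrite HB Hpe wh subrr.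
suff : c + f `|v - w| <= b by lra.
have [sg|sg] := leP 0 (ip (v - w) e).
  apply: (keyV Hip Hh f Hf_nonneg Hclosed Hsup u1 w v e ss D a1 b c e1 eh vwh erefl ss0 sg vw).
    lra.
  have [ssD'|ssD'] := eqVneq ss D.
    left; rewrite /c ge_max; apply/andP; split; first lra.
    rewrite ssD' subrr F0; lra.
  right; split; first by rewrite lt_neqAle ssD' ssD.
  move=> s' ss' s'D; rewrite /c ge_max; apply/andP; split.
    have := mono ss s' ss0 (ltW ss'); lra.
  suff : f (D - ss) <= a1 + f s' - a2 by lra.
  apply: (LC Hip Hh f Hclosed e e1 eh); first by rewrite subr_gt0 lt_neqAle ssD' ssD.
  move=> d' d'0 d'lt.
  have [d's'|d's'] := leP d' (D - s').
    have := mono d' (D - s') d'0 d's'; have := notA s' ss' s'D; lra.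
  have := notA (D - d') ltac:(lra) ltac:(lra).
  rewrite (_ : D - (D - d') = d'); last lra.
  have := mono (D - d') s' ltac:(lra) ltac:(lra); lra.
have e1' : `|- e| = 1 by rewrite normrN.
have eh' : ip (- e) h = 0 by rewrite -scaleN1r HZ eh mulr0.
have sg' : 0 <= ip (v - w) (- e).
  by rewrite Hsy -scaleN1r HZ Hsy; lra.
apply: (keyV Hip Hh f Hf_nonneg Hclosed Hsup u2 w v (- e) (D - ss) D a2 b c e1' eh' vwh wE2 ltac:(lra) sg' vw).
  lra.
have [ss0'|ss0'] := eqVneq ss 0.
  left; rewrite /c ge_max; apply/andP; split; last lra.
  rewrite ss0' F0 subr0; lra.
right; split.
  have : 0 < ss by rewrite lt_neqAle eq_sym ss0' ss0.
  lra.
move=> t' tt' t'D; rewrite /c ge_max; apply/andP; split; last first.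
  have := mono (D - ss) t' ltac:(lra) ltac:(lra); lra.
suff : f ss <= a2 + f t' - a1 by lra.
apply: (LC Hip Hh f Hclosed e e1 eh); first by rewrite lt_neqAle eq_sym ss0' ss0.
move=> d' d'0 d'lt.
have [s'' [As''0 [As''D As'']] Hs''] := supA (Num.max d' (D - t')) ltac:(rewrite gt_max; apply/andP; split; lra).
move: Hs''; rewrite gt_max => /andP [H1 H2].
have := mono d' s'' d'0 (ltW H1).
have := mono (D - s'') t' ltac:(lra) ltac:(lra).
lra.
Qed.
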